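(* Let $\alpha\ge1$ be an integer and $0<\eta_1<\dots<\eta_\alpha<1$. Let $r_y$ be the rank function on $[-D,D]$ with thresholds $q_j=\eta_jD$ ($j=1,\dots,\alpha$), and let $r_z$ be the rank function on $[-2V,2V]$ with thresholds $q_j=\eta_j\xi V$ ($j=1,\dots,\alpha$) and $q_{\alpha+1}=\xi V$ (so $z$ has $\beta=\alpha+1$ thresholds). For $\mathbf{x}_1,\mathbf{x}_2\in S$ let $y=f(\mathbf{x}_1)-f(\mathbf{x}_2)$, $z=\theta(\mathbf{x}_1)-\theta(\mathbf{x}_2)$, $\varphi=r_y(y)+r_z(z)$, and $e=\xi V/D$. Then for all $\mathbf{x}_1,\mathbf{x}_2\in S$: (i) if $\varphi<0$ then $\pi(\mathbf{x}_1)>\pi(\mathbf{x}_2)$; (ii) if $\varphi>0$ then $\pi(\mathbf{x}_1)<\pi(\mathbf{x}_2)$; (iii) if $\varphi=0$ and $z=-ey$ then $\pi(\mathbf{x}_1)=\pi(\mathbf{x}_2)$; (iv) if $\varphi=0$ and $z<-ey$ then $\pi(\mathbf{x}_1)>\pi(\mathbf{x}_2)$; (v) if $\varphi=0$ and $z>-ey$ then $\pi(\mathbf{x}_1)<\pi(\mathbf{x}_2)$.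
   Context: Let $S\subset\mathbb{R}^k$ be a compact box, $f,g_1,\dots,g_m,h_{m+1},\dots,h_n:S\to\mathbb{R}$ continuous, $\delta>0$. Put $v_i(\mathbf{x})=\max\{g_i(\mathbf{x}),0\}$ ($i\le m$), $v_i(\mathbf{x})=\max\{|h_i(\mathbf{x})|-\delta,0\}$ ($m<i\le n$), $\vartheta(\mathbf{x})=\sum_{i=1}^n v_i(\mathbf{x})$; $\mathbf{x}$ is feasible iff $\vartheta(\mathbf{x})=0$. Let $D=\max_S f-\min_S f$ and $V=\max_S\vartheta$, and assume $D>0$, $V>0$. Define $\theta(\mathbf{x})=-V$ if $\vartheta(\mathbf{x})=0$ and $\theta(\mathbf{x})=\vartheta(\mathbf{x})$ otherwise. Let $\rho(\mathbf{x})=\#\{i: v_i(\mathbf{x})>0\}$ and $\mathbb{I}(\rho(\mathbf{x})>0)$ be $1$ if $\rho(\mathbf{x})>0$ and $0$ otherwise. Fix $0<\xi\le 1$ and define $\sigma(\mathbf{x})=\mathbb{I}(\rho(\mathbf{x})>0)\,D+\frac{D}{\xi V}\theta(\mathbf{x})$, $\pi(\mathbf{x})=-(f(\mathbf{x})+\sigma(\mathbf{x}))$. Rank function: given $b>0$ and thresholds $0<q_1<\dots<q_a<b$, set $q_0=0$, $q_{a+1}=b$ and define $r:[-b,b]\to\mathbb{Z}$ by $r(0)=0$; $r(\Delta)=j$ if $q_{j-1}<\Delta\le q_j$ ($1\le j\le a+1$); $r(\Delta)=-j$ if $-q_j\le\Delta<-q_{j-1}$ ($1\le j\le a+1$). 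*)

(* Defs.v *)
From HB Require Import structures.
From mathcomp Require Import all_boot all_order all_algebra.
From mathcomp Require Import all_classical all_reals all_analysis.
Set Implicit Arguments. Unset Strict Implicit. Unset Printing Implicit Defensive.
Import Order.TTheory GRing.Theory Num.Theory.
Local Open Scope classical_set_scope.
Local Open Scope ring_scope.

Section Defs.
Variable R : realType.

Definition box (k : nat) (lo hi : 'I_k -> R) : set 'rV[R]_k :=
  [set x | forall i : 'I_k, lo i <= x ord0 i <= hi i].

(* max_S F and min_S F (attained since S is compact and F continuous) *)
Definition maxS (T : Type) (S : set T) (F : T -> R) : R := sup (F @` S).
Definition minS (T : Type) (S : set T) (F : T -> R) : R := inf (F @` S).

Definition vineq (T : Type) (gi : T -> R) (x : T) : R := Num.max (gi x) 0.
Definition veq (T : Type) (delta : R) (hi : T -> R) (x : T) : R :=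
  Num.max (`|hi x| - delta) 0.

(* vartheta(x) = sum of all violations; the m inequality constraints are g : 'I_m,
   the n - m equality constraints are h : 'I_p (p = n - m) *)
Definition vtheta (T : Type) (m p : nat) (g : 'I_m -> T -> R) (h : 'I_p -> T -> R)
  (delta : R) (x : T) : R :=
  \sum_(i < m) vineq (g i) x + \sum_(j < p) veq delta (h j) x.

Definition rho (T : Type) (m p : nat) (g : 'I_m -> T -> R) (h : 'I_p -> T -> R)
  (delta : R) (x : T) : nat :=
  (#|[set i : 'I_m | (0 < vineq (g i) x)%R]| + #|[set j : 'I_p | (0 < veq delta (h j) x)%R]|)%N.

Definition theta (T : Type) (V : R) (vt : T -> R) (x : T) : R :=
  if vt x == 0 then - V else vt x.

Definition sigma (T : Type) (m p : nat) (g : 'I_m -> T -> R) (h : 'I_p -> T -> R)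
  (delta D V xi : R) (x : T) : R :=
  (if (0 < rho g h delta x)%N then D else 0)
  + D / (xi * V) * theta V (vtheta g h delta) x.

Definition pi_fun (T : Type) (f : T -> R) (m p : nat) (g : 'I_m -> T -> R)
  (h : 'I_p -> T -> R) (delta D V xi : R) (x : T) : R :=
  - (f x + sigma g h delta D V xi x).

Definition qext (b : R) (a : nat) (q : nat -> R) (j : nat) : R :=
  if j == 0%N then 0 else if j == a.+1 then b else q j.

(* r : [-b,b] -> Z is the rank function with thresholds q_1 < ... < q_a
   (the values of r outside [-b,b] are irrelevant) *)
Definition rank_fun (b : R) (a : nat) (q : nat -> R) (r : R -> int) : Prop :=
  r 0 = 0 /\
  forall (j : nat) (d : R), (1 <= j <= a.+1)%N ->
    (qext b a q j.-1 < d <= qext b a q j -> r d = j%:Z) /\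
    (- qext b a q j <= d < - qext b a q j.-1 -> r d = - (j%:Z)).

End Defs.

(* Main.v *)
Require Import Defs.
From HB Require Import structures.
From mathcomp Require Import all_boot all_order all_algebra.
From mathcomp Require Import all_classical all_reals all_analysis.
From mathcomp Require Import zify ring lra.
Import Order.TTheory GRing.Theory Num.Theory numFieldNormedType.Exports.
Local Open Scope classical_set_scope.
Local Open Scope ring_scope.
Set Implicit Arguments. Unset Strict Implicit. Unset Printing Implicit Defensive.

Definition cnt (R : realType) (Q : nat -> R) (a : nat) (d : R) : int :=
  (\sum_(j < a.+1) nat_of_bool (Q j < d)%R)%:Z - (\sum_(j < a.+1) nat_of_bool (d < - Q j)%R)%:Z.

Lemma sum_lt (n m : nat) : (\sum_(j < n) (j < m : nat) = minn m n)%N.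
Proof.
elim: n => [|n IH]; first by rewrite big_ord0 minn0.
rewrite big_ord_recr /= IH; case: ltnP => H /=; lia.
Qed.

Lemma Qmono (R : realType) (Q : nat -> R) n :
  (forall j, (j < n)%N -> Q j < Q j.+1) -> forall i j, (i <= j <= n)%N -> Q i <= Q j.
Proof.
move=> H i j /andP[ij jn]; elim: j ij jn => [|j IH] ij jn.
  by rewrite leqn0 in ij; move/eqP: ij => ->.
rewrite leq_eqVlt in ij; case/orP: ij => [/eqP->//| ij].
exact: le_trans (IH ij (ltnW jn)) (ltW (H j jn)).
Qed.

Lemma cntN (R : realType) (Q : nat -> R) a d : cnt Q a (- d) = - cnt Q a d.
Proof.
rewrite /cnt opprB; congr (_ - _); congr (_%:Z); apply: eq_bigr => j _.
  by rewrite ltrNr.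
by rewrite ltrN2.
Qed.

Lemma cnt_mono (R : realType) (Q : nat -> R) a u w : u <= w -> cnt Q a u <= cnt Q a w.
Proof.
move=> uw; rewrite /cnt lerB // lez_nat; apply: leq_sum => j _.
  by case H: (Q j < u)%R => //=; rewrite (lt_le_trans H uw).
by case H: (w < - Q j)%R => //=; rewrite (le_lt_trans uw H).
Qed.

Lemma rank_pos (R : realType) (b : R) a q r : rank_fun b a q r ->
  (forall j, (j < a.+1)%N -> qext b a q j < qext b a q j.+1) ->
  forall d, 0 < d <= b -> r d = cnt (qext b a q) a d.
Proof.
move=> [r0 rk] Qinc d /andP[d0 db].
set Q := qext b a q in Qinc *.
have Qm := Qmono Qinc.
have Q0 : Q 0%N = 0 by rewrite /Q/qext eqxx.
have Qb : Q a.+1 = b by rewrite /Q/qext /= eqxx.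
have ex : exists j, (fun j => d <= Q j) j by exists a.+1; rewrite Qb.
case: (ex_minnP ex) => j0 Hj0 Hmin.
have j0a : (j0 <= a.+1)%N by apply: Hmin; rewrite Qb.
have j0pos : (0 < j0)%N.
  case: j0 Hj0 {Hmin j0a} => // Hj0; rewrite Q0 in Hj0.
  by move: (lt_le_trans d0 Hj0); rewrite ltxx.
have lt : Q j0.-1 < d.
  rewrite ltNge; apply/negP => /Hmin; case: j0 j0pos {Hj0 Hmin j0a} => //= n _.
  by rewrite ltnn.
have -> : r d = j0%:Z.
  by apply: ((rk j0 d _).1); [rewrite j0pos j0a | rewrite lt Hj0].
have Qge0 : forall j : 'I_a.+1, 0 <= Q j.
  by move=> j; rewrite -Q0; apply: Qm; rewrite leq0n /= ltnW.
rewrite /cnt.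
rewrite (eq_bigr (fun j : 'I_a.+1 => nat_of_bool (j < j0)%N)); last first.
  move=> j _; congr nat_of_bool; apply/idP/idP.
    move=> Hj; rewrite ltnNge; apply/negP => jj.
    have := Qm j0 j; rewrite jj ltnW //= => /(_ isT) H.
    by move: (le_trans Hj0 H); rewrite leNgt Hj.
  move=> jj; rewrite ltNge; apply/negP => /Hmin; rewrite leqNgt jj.
  done.
have -> : (\sum_(j < a.+1) nat_of_bool (d < - Q j)%R = 0)%N.
  apply: big1 => j _; have := Qge0 j; rewrite -oppr_le0 => H.
  by rewrite ltNge (le_trans H (ltW d0)).
by rewrite sum_lt subr0; move/minn_idPl: j0a => ->.
Qed.

Lemma rank_cnt (R : realType) (b : R) a q r : rank_fun b a q r ->
  (forall j, (j < a.+1)%N -> qext b a q j < qext b a q j.+1) ->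
  forall d, - b <= d <= b -> r d = cnt (qext b a q) a d.
Proof.
move=> rf Qinc d /andP[bd db].
have [r0 rk] := rf.
have Q0 : qext b a q 0%N = 0 by rewrite /qext eqxx.
have Qge0 : forall j : 'I_a.+1, 0 <= qext b a q j.
  by move=> j; rewrite -Q0; apply: (Qmono Qinc); rewrite leq0n /= ltnW.
case: (ltgtP d 0) => [dn|dp|->].
- have rf' : rank_fun b a q (fun d => - r (- d)).
    split; first by rewrite oppr0 r0 oppr0.
    move=> j x jr; split => H.
      by rewrite ((rk j (- x) jr).2) ?opprK // lerN2 ltrN2 andbC.
    by rewrite ((rk j (- x) jr).1) ?opprK // ltrNr lerNl andbC.
  have := rank_pos rf' Qinc (d := - d); rewrite opprK cntN => H.
  by apply: oppr_inj; apply: H; rewrite oppr_gt0 dn lerNl.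
- by apply: rank_pos; rewrite ?dp.
by rewrite r0 /cnt !big1 // => j _; case: ltP => // H; exfalso; have := Qge0 j; lra.
Qed.

Lemma phi_neg (R : realType) (Q : nat -> R) a u v :
  cnt Q a u + cnt Q a v < 0 -> u + v < 0.
Proof.
move=> H; rewrite ltNge; apply/negP => uv.
have : - v <= u by lra.
move/(cnt_mono Q a); rewrite cntN => H'; lia.
Qed.

Lemma phi_pos (R : realType) (Q : nat -> R) a u v :
  0 < cnt Q a u + cnt Q a v -> 0 < u + v.
Proof.
move=> H; have : cnt Q a (- u) + cnt Q a (- v) < 0 by rewrite !cntN; lia.
move/phi_neg; lra.
Qed.

Lemma inc_from (R : realType) (Q : nat -> R) (eta : nat -> R) c a :
  0 < c -> (1 <= a)%N -> Q 0%N = 0 -> (forall j, (1 <= j <= a)%N -> Q j = eta j * c) ->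
  Q a.+1 = c -> 0 < eta 1%N -> (forall j, (1 <= j < a)%N -> eta j < eta j.+1) ->
  eta a < 1 -> forall j, (j < a.+1)%N -> Q j < Q j.+1.
Proof.
move=> c0 a1 Q0 QE Qa e1 einc ea j jl.
case: j jl => [|j] jl.
  by rewrite Q0 QE ?a1 // mulr_gt0.
case: (ltngtP j.+1 a) => H.
  by rewrite !QE ?H ?(ltnW H) // ltr_pM2r // einc.
  lia.
subst a; by rewrite Qa QE ?leqnn // -[ltRHS]mul1r ltr_pM2r.
Qed.

Lemma vt_ge0 (R : realType) (T : Type) m p (g : 'I_m -> T -> R) (h : 'I_p -> T -> R) delta x :
  0 <= vtheta g h delta x.
Proof.
by rewrite /vtheta addr_ge0 // sumr_ge0 // => i _; rewrite /vineq /veq le_max lexx orbT.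
Qed.

Lemma rho_vt (R : realType) (T : Type) m p (g : 'I_m -> T -> R) (h : 'I_p -> T -> R) delta x :
  (0 < rho g h delta x)%N = (vtheta g h delta x != 0).
Proof.
have H1 : forall i, 0 <= vineq (g i) x by move=> i; rewrite /vineq le_max lexx orbT.
have H2 : forall i, 0 <= veq delta (h i) x by move=> i; rewrite /veq le_max lexx orbT.
apply/idP/idP.
  rewrite /rho addn_gt0 => /orP [] /card_gt0P [i]; rewrite inE /= => Hi.
    have S1 : 0 <= \sum_(j < m | j != i) vineq (g j) x by apply: sumr_ge0.
    have S2 : 0 <= \sum_(j < p) veq delta (h j) x by apply: sumr_ge0.
    rewrite gt_eqF // /vtheta (bigD1 i) //=; lra.
  have S1 : 0 <= \sum_(j < p | j != i) veq delta (h j) x by apply: sumr_ge0.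
  have S2 : 0 <= \sum_(j < m) vineq (g j) x by apply: sumr_ge0.
  rewrite gt_eqF // /vtheta [X in _ + X](bigD1 i) //=; lra.
move=> /eqP vt; rewrite lt0n; apply/negP => /eqP; rewrite /rho => /eqP.
rewrite addn_eq0 => /andP[/eqP/card0_eq A /eqP/card0_eq B]; apply: vt.
rewrite /vtheta !big1 ?addr0 // => i _.
  have := B i; rewrite !inE => /negbT /asboolPn /negP; rewrite -leNgt => H.
  by apply/le_anti; rewrite H H2.
have := A i; rewrite !inE => /negbT /asboolPn /negP; rewrite -leNgt => H.
by apply/le_anti; rewrite H H1.
Qed.

Lemma box_compact (R : realType) k (lo hi : 'I_k -> R) : compact (box lo hi).
Proof.
have := @rV_compact R k (fun i => `[lo i, hi i]%classic) (fun i => @segment_compact R (lo i) (hi i)).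
congr compact; apply/funext => v; apply/propext; split => H i; have := H i;
  by rewrite /= in_itv.
Qed.

Lemma fbounds (R : realType) k (lo hi : 'I_k -> R) (f : 'rV[R]_k -> R) :
  {within box lo hi, continuous f} -> forall x, box lo hi x ->
  minS (box lo hi) f <= f x <= maxS (box lo hi) f.
Proof.
move=> fc x Sx.
have cA := continuous_compact fc (@box_compact R k lo hi).
have [M [_ MA]] := compact_bounded cA.
have ub : has_ubound (f @` box lo hi).
  by exists (M + 1) => y /MA My; rewrite (le_trans _ (My _ _)) ?ler_norm ?ltrDl.
have lb : has_lbound (f @` box lo hi).
  exists (- (M + 1)) => y /MA My.
  by have := My (M + 1); rewrite ltrDl ltr01 => /(_ isT) /=; rewrite ler_norml => /andP[].
have fx : (f @` box lo hi) (f x) by exists x.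
by rewrite /minS /maxS (ge_inf lb fx) (ub_le_sup ub fx).
Qed.

Lemma vbound (R : realType) (T : Type) (S : set T) (F : T -> R) :
  0 < maxS S F -> forall x, S x -> F x <= maxS S F.
Proof.
move=> V0 x Sx.
have ub : has_ubound (F @` S).
  case: (pselect (has_ubound (F @` S))) => // nub; exfalso.
  by move: V0; rewrite /maxS sup_out ?ltxx // => -[].
by apply: ub_le_sup ub _ _; exists x.
Qed.
Lemma qext0 (R : realType) (b : R) a q : qext b a q 0%N = 0.
Proof. by rewrite /qext eqxx. Qed.

Lemma qextS (R : realType) (b : R) a q j : (0 < j <= a)%N -> qext b a q j = q j.
Proof.
move=> /andP[j0 ja]; rewrite /qext.
have -> : (j == 0%N) = false by apply/eqP; lia.
have -> : (j == a.+1) = false by apply/eqP; lia.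
done.
Qed.

Lemma qextA (R : realType) (b : R) a q : qext b a q a.+1 = b.
Proof. by rewrite /qext /= eqxx. Qed.

Lemma ifq (R : realType) (alpha j : nat) (u w : R) : (j <= alpha)%N ->
  (if j == alpha.+1 then u else w) = w.
Proof. by move=> H; have -> : (j == alpha.+1) = false by apply/eqP; lia. Qed.

Lemma closeP (R : realType) (P1 P2 t W : R) : 0 < t -> P1 - P2 = - (t * W) ->
  [/\ (W < 0 -> P2 < P1), (0 < W -> P1 < P2) & (W = 0 -> P1 = P2)].
Proof.
move=> t0 E; split => H.
- by rewrite -subr_gt0 E oppr_gt0 pmulr_rlt0.
- by rewrite -subr_lt0 E oppr_lt0 pmulr_rgt0.
- by apply/eqP; rewrite -subr_eq0 E H mulr0 oppr0.
Qed.

Theorem lemma10 (R : realType) (k m p : nat) (lo hi : 'I_k -> R)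
  (f : 'rV[R]_k -> R) (g : 'I_m -> 'rV[R]_k -> R) (h : 'I_p -> 'rV[R]_k -> R)
  (delta xi : R) (alpha : nat) (eta : nat -> R) (ry rz : R -> int) :
  (forall i, lo i <= hi i) ->
  {within box lo hi, continuous f} ->
  (forall i, {within box lo hi, continuous (g i)}) ->
  (forall j, {within box lo hi, continuous (h j)}) ->
  0 < delta ->
  let S := box lo hi in
  let D := maxS S f - minS S f in
  let V := maxS S (vtheta g h delta) in
  0 < D -> 0 < V -> 0 < xi <= 1 ->
  (1 <= alpha)%N ->
  0 < eta 1%N -> (forall j, (1 <= j < alpha)%N -> eta j < eta j.+1) -> eta alpha < 1 ->
  rank_fun D alpha (fun j => eta j * D) ry ->
  rank_fun (2 * V) alpha.+1
    (fun j => if j == alpha.+1 then xi * V else eta j * (xi * V)) rz ->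
  forall x1 x2, S x1 -> S x2 ->
  let pi := pi_fun f g h delta D V xi in
  let y := f x1 - f x2 in
  let z := theta V (vtheta g h delta) x1 - theta V (vtheta g h delta) x2 in
  let phi := ry y + rz z in
  let e := xi * V / D in
  [/\ (phi < 0 -> pi x1 > pi x2),
      (phi > 0 -> pi x1 < pi x2),
      (phi = 0 -> z = - (e * y) -> pi x1 = pi x2),
      (phi = 0 -> z < - (e * y) -> pi x1 > pi x2)
    & (phi = 0 -> z > - (e * y) -> pi x1 < pi x2)].
Proof.
move=> lohi fc gc hc d0 S D V D0 V0 /andP[xi0 xi1] a1 eta1 etainc etaa ryf rzf
  x1 x2 Sx1 Sx2 pi y z phi e.
have vt0 : forall x, 0 <= vtheta g h delta x by move=> x; apply: vt_ge0.
have vb : forall x, S x -> vtheta g h delta x <= V by move=> x; apply: vbound.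
have xV0 : 0 < xi * V by rewrite mulr_gt0.
have Dn0 : D != 0 by rewrite gt_eqF.
have xVn0 : xi * V != 0 by rewrite gt_eqF.
have eD : e * D = xi * V by rewrite /e; field.
have e0 : 0 < e by rewrite /e divr_gt0.
have Qyinc : forall j, (j < alpha.+1)%N ->
    qext D alpha (fun j => eta j * D) j < qext D alpha (fun j => eta j * D) j.+1.
  apply: (inc_from (eta := eta) D0 a1 (qext0 _ _ _) _ (qextA _ _ _) eta1 etainc etaa).
  by move=> j /qextS ->.
set Qz := qext (2 * V) alpha.+1 (fun j => if j == alpha.+1 then xi * V else eta j * (xi * V)).
have QzA : Qz alpha.+1 = xi * V by rewrite /Qz qextS ?eqxx // ltn0Sn /=.
have Qzinc : forall j, (j < alpha.+2)%N -> Qz j < Qz j.+1.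
  move=> j; rewrite ltnS leq_eqVlt => /orP[/eqP ->|jl].
    rewrite QzA /Qz qextA.
    by rewrite ltr_pM2r // (le_lt_trans xi1) // ltr1n.
  move: j jl; apply: (inc_from (eta := eta) xV0 a1 (qext0 _ _ _) _ QzA eta1 etainc etaa).
  move=> j /andP[j1 ja]; rewrite /Qz qextS ?j1 ?(leq_trans ja) //.
  by rewrite ifq.
have ryc := rank_cnt ryf Qyinc.
have rzc := rank_cnt rzf Qzinc.
have /andP[m1 M1] := fbounds fc Sx1.
have /andP[m2 M2] := fbounds fc Sx2.
have yb : - D <= y <= D by rewrite /y /D; apply/andP; split; lra.
have eyb : - (xi * V) <= e * y <= xi * V.
  by rewrite -eD -mulrN !ler_pM2l.
have QzE : forall j : 'I_alpha.+1, Qz j = e * qext D alpha (fun j => eta j * D) j.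
  move=> j; case: (posnP j) => [->|jp]; first by rewrite /Qz !qext0 mulr0.
  have ja : (j <= alpha)%N by rewrite -ltnS.
  rewrite /Qz !qextS ?jp ?ja ?(leq_trans ja) // ifq //.
  by rewrite /e; field.
have ryz : ry y = cnt Qz alpha.+1 (e * y).
  rewrite (ryc _ yb) /cnt !(@big_ord_recr _ _ _ alpha.+1) /= QzA.
  have -> : (xi * V < e * y) = false by apply/negbTE; rewrite -leNgt; case/andP: eyb.
  have -> : (e * y < - (xi * V)) = false by apply/negbTE; rewrite -leNgt; case/andP: eyb.
  rewrite !addn0; congr (Posz _ - Posz _); apply: eq_bigr => j _; rewrite QzE.
    by rewrite ltr_pM2l.
  by rewrite -mulrN ltr_pM2l.
have ryD : ry D = (alpha.+1)%:Z.
  apply: ((ryf.2 alpha.+1 D _).1) => //=.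
  rewrite qextA lexx andbT qextS ?a1 ?leqnn //.
  by rewrite -[ltRHS]mul1r ltr_pM2r.
have Db : - D <= D <= D by rewrite lexx andbT; lra.
have ryub : ry y <= (alpha.+1)%:Z.
  by rewrite -ryD (ryc _ yb) (ryc D Db) cnt_mono //; case/andP: yb.
have rylb : - (alpha.+1)%:Z <= ry y.
  by rewrite -ryD (ryc _ yb) (ryc D Db) -cntN cnt_mono //; case/andP: yb.
set vt := vtheta g h delta.
have Epi : forall x, pi x = - (f x + ((vt x != 0)%:R * D + D / (xi * V) * theta V vt x)).
  by move=> x; rewrite /pi /pi_fun /sigma rho_vt; case: (_ != 0); rewrite ?mul1r ?mul0r.
set t := D / (xi * V).
have t0 : 0 < t by rewrite /t divr_gt0.
have Ediff : pi x1 - pi x2 =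
    - (t * (e * y + z + ((vt x1 != 0)%:R - (vt x2 != 0)%:R) * (xi * V))).
  rewrite !Epi /y /z /t /e; field.
  by rewrite Dn0 (gt_eqF V0) (gt_eqF xi0).
have vb1 : vt x1 <= V := vb _ Sx1.
have vb2 : vt x2 <= V := vb _ Sx2.
have vp1 : 0 <= vt x1 := vt0 x1.
have vp2 : 0 <= vt x2 := vt0 x2.
have xiV : xi * V <= V by rewrite ler_piMl // ltW.
have phiE : phi = ry y + rz z by [].
case: (eqVneq (vt x1) 0) => v1; case: (eqVneq (vt x2) 0) => v2.
-
  have zE : z = 0 by rewrite /z /theta -/vt v1 v2 eqxx subrr.
  rewrite v1 v2 eqxx /= subrr mul0r addr0 in Ediff.
  have [C1 C2 C3] := closeP t0 Ediff.
  have zb : - (2 * V) <= z <= 2 * V by rewrite zE; apply/andP; split; lra.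
  rewrite phiE ryz (rzc _ zb).
  split.
  + by move/phi_neg => H; apply: C1.
  + by move/phi_pos => H; apply: C2.
  + by move=> _ H; apply: C3; rewrite H subrr.
  + by move=> _ H; apply: C1; lra.
  + by move=> _ H; apply: C2; lra.
-
  have zE : z = - V - vt x2 by rewrite /z /theta -/vt v1 eqxx (negbTE v2).
  rewrite v1 v2 eqxx /= sub0r mulN1r in Ediff.
  have [C1 _ _] := closeP t0 Ediff.
  have v2p : 0 < vt x2 by rewrite lt_neqAle eq_sym v2 vp2.
  have rzz : rz z = - (alpha.+2)%:Z.
    apply: ((rzf.2 alpha.+2 z _).2) => //=.
    rewrite -/Qz QzA /Qz qextA zE; apply/andP; split; lra.
  have phin : phi < 0.
    by rewrite phiE rzz subr_lt0 (le_lt_trans ryub) // ltz_nat.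
  split.
  + by move=> _; apply: C1; case/andP: eyb => _ H; lra.
  + by move=> H; move: (lt_trans phin H); rewrite ltxx.
  + by move=> H; rewrite H ltxx in phin.
  + by move=> H; rewrite H ltxx in phin.
  + by move=> H; rewrite H ltxx in phin.
-
  have zE : z = vt x1 + V by rewrite /z /theta -/vt v2 eqxx (negbTE v1) opprK.
  rewrite v1 v2 eqxx /= subr0 mul1r in Ediff.
  have [_ C2 _] := closeP t0 Ediff.
  have v1p : 0 < vt x1 by rewrite lt_neqAle eq_sym v1 vp1.
  have rzz : rz z = (alpha.+2)%:Z.
    apply: ((rzf.2 alpha.+2 z _).1) => //=.
    rewrite -/Qz QzA /Qz qextA zE; apply/andP; split; lra.
  have phip : 0 < phi.
    rewrite phiE rzz -[Posz _]opprK subr_gt0 (lt_le_trans _ rylb) //.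
    by rewrite ltrN2 ltz_nat.
  split.
  + by move=> H; move: (lt_trans phip H); rewrite ltxx.
  + by move=> _; apply: C2; case/andP: eyb => H _; lra.
  + by move=> H; rewrite H ltxx in phip.
  + by move=> H; rewrite H ltxx in phip.
  + by move=> H; rewrite H ltxx in phip.
-
  have zE : z = vt x1 - vt x2 by rewrite /z /theta -/vt (negbTE v1) (negbTE v2).
  rewrite v1 v2 /= subrr mul0r addr0 in Ediff.
  have [C1 C2 C3] := closeP t0 Ediff.
  have zb : - (2 * V) <= z <= 2 * V by rewrite zE; apply/andP; split; lra.
  rewrite phiE ryz (rzc _ zb).
  split.
  + by move/phi_neg => H; apply: C1.
  + by move/phi_pos => H; apply: C2.
  + by move=> _ H; apply: C3; rewrite H subrr.
  + by move=> _ H; apply: C1; lra.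
  + by move=> _ H; apply: C2; lra.
Qed.
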